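(* Let $a,b,q$ be parameters (complex numbers or indeterminates) such that none of the denominators below vanishes, and put $c(n,a,b,q)=\frac{(b;q)_n}{(a;q)_n}$. Define, for $n\ge 0$, $$T(2n)=\frac{q^n(1-q^nb)(1-q^{n-1}a)}{(1-q^{2n-1}a)(1-q^{2n}a)},\qquad T(2n+1)=\frac{q^n(1-q^{n+1})(b-q^na)}{(1-q^{2n+1}a)(1-q^{2n}a)},$$ and define numbers $A(n,k)$ for integers $n\ge 0$ and all integers $k$ by $$A(2n,2k)=\begin{bmatrix} n\\ k\end{bmatrix} c(n-k,q^{2k}a,q^kb,q),\qquad A(2n+1,2k+1)=\begin{bmatrix} n\\ k\end{bmatrix} c(n-k,q^{2k+1}a,q^{k+1}b,q),$$ and $A(n,k)=0$ whenever $n-k$ is odd. Then $$A(0,k)=[k=0],\qquad A(n,0)=T(0)A(n-1,1)\ (n\ge1),\qquad A(n,k)=A(n-1,k-1)+T(k)A(n-1,k+1)\ (n\ge1,\ k\ge1).$$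
   Context: Notation: $(x;q)_n=\prod_{j=0}^{n-1}(1-q^jx)$; $\begin{bmatrix} n\\ k\end{bmatrix}=\frac{(q;q)_n}{(q;q)_k(q;q)_{n-k}}$ for $0\le k\le n$ and $\begin{bmatrix} n\\ k\end{bmatrix}=0$ for $k<0$ or $k>n$. $[P]$ denotes $1$ if $P$ is true and $0$ otherwise. (At $n=0$ the factor $1-q^{-1}a$ cancels, so $T(0)=\frac{1-b}{1-a}$.) *)

(* Defs.v *)
From mathcomp Require Import all_boot all_order all_algebra.
Set Implicit Arguments. Unset Strict Implicit. Unset Printing Implicit Defensive.
Import Order.TTheory GRing.Theory Num.Theory.
Local Open Scope ring_scope.

Definition qpoch (F : fieldType) (x q : F) (n : nat) : F :=
  \prod_(j < n) (1 - q ^+ j * x).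

Definition qbinom (F : fieldType) (q : F) (n k : nat) : F :=
  if (k <= n)%N then qpoch q q n / (qpoch q q k * qpoch q q (n - k)) else 0.

Definition cfun (F : fieldType) (n : nat) (a b q : F) : F :=
  qpoch b q n / qpoch a q n.

(* T(k); T(0) = (1-b)/(1-a) after cancelling the factor 1 - q^{-1} a *)
Definition Tfun (F : fieldType) (a b q : F) (k : nat) : F :=
  if k == 0%N then (1 - b) / (1 - a)
  else if odd k then
    let n := k./2 in
    q ^+ n * (1 - q ^+ n.+1) * (b - q ^+ n * a) /
      ((1 - q ^+ (n.*2.+1) * a) * (1 - q ^+ (n.*2) * a))
  else
    let n := k./2 in
    q ^+ n * (1 - q ^+ n * b) * (1 - q ^+ n.-1 * a) /
      ((1 - q ^+ (n.*2).-1 * a) * (1 - q ^+ (n.*2) * a)).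

(* A(2m,2j)   = [m j] c(m-j, q^{2j} a, q^j b, q)
   A(2m+1,2j+1) = [m j] c(m-j, q^{2j+1} a, q^{j+1} b, q)
   A(n,k) = 0 if n-k odd; negative k gives 0 (Gaussian binomial vanishes). *)
Definition Afun (F : fieldType) (a b q : F) (n : nat) (k : int) : F :=
  match k with
  | Negz _ => 0
  | Posz k =>
      if odd (n + k) then 0
      else if odd n then
        qbinom q n./2 k./2 * cfun (n./2 - k./2) (q ^+ k * a) (q ^+ (k./2).+1 * b) q
      else
        qbinom q n./2 k./2 * cfun (n./2 - k./2) (q ^+ k * a) (q ^+ (k./2) * b) q
  end.

(* Main.v *)
Require Import Defs.
From mathcomp Require Import all_boot all_order all_algebra.
From mathcomp Require Import ring.
Import Order.TTheory GRing.Theory Num.Theory.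
Local Open Scope ring_scope.
Set Implicit Arguments. Unset Strict Implicit.

Lemma qpochS (F : fieldType) (x q : F) n :
  qpoch x q n.+1 = qpoch x q n * (1 - q ^+ n * x).
Proof. by rewrite /qpoch big_ord_recr. Qed.

Lemma qpochSl (F : fieldType) (x q : F) k n :
  qpoch (q ^+ k * x) q n.+1 = (1 - q ^+ k * x) * qpoch (q ^+ k.+1 * x) q n.
Proof.
rewrite /qpoch big_ord_recl expr0 mul1r; congr (_ * _).
by apply: eq_bigr => i _; rewrite !mulrA -!exprD /= /bump leq0n add1n addnS.
Qed.

Lemma qpoch_shift (F : fieldType) (x q : F) k n : 1 - q ^+ k * x != 0 ->
  qpoch (q ^+ k.+1 * x) q n =
  qpoch (q ^+ k * x) q n * (1 - q ^+ n * (q ^+ k * x)) / (1 - q ^+ k * x).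
Proof.
move=> h; rewrite -qpochS qpochSl.
by rewrite [RHS]mulrC mulKf.
Qed.

Lemma qpoch_a_neq0 (F : fieldType) (a q : F) k n :
  (forall m : nat, 1 - q ^+ m * a != 0) -> qpoch (q ^+ k * a) q n != 0.
Proof.
move=> ha; rewrite /qpoch; apply/prodf_neq0 => i _.
by rewrite mulrA -exprD.
Qed.

Lemma qpoch_q_neq0 (F : fieldType) (q : F) n :
  (forall m : nat, 1 - q ^+ m.+1 != 0) -> qpoch q q n != 0.
Proof.
move=> hq; rewrite /qpoch; apply/prodf_neq0 => i _.
by rewrite -exprSr.
Qed.

Lemma Afun_par (F : fieldType) (a b q : F) n k :
  odd (n + k) -> Afun a b q n (Posz k) = 0.
Proof. by rewrite /Afun => ->. Qed.

Lemma Afun_ev (F : fieldType) (a b q : F) m j :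
  Afun a b q (m.*2) (Posz (j.*2)) =
  qbinom q m j * cfun (m - j) (q ^+ (j.*2) * a) (q ^+ j * b) q.
Proof.
by rewrite /Afun -doubleD !odd_double !doubleK.
Qed.

Lemma Afun_od (F : fieldType) (a b q : F) m j :
  Afun a b q (m.*2.+1) (Posz (j.*2.+1)) =
  qbinom q m j * cfun (m - j) (q ^+ (j.*2.+1) * a) (q ^+ j.+1 * b) q.
Proof.
rewrite /Afun addSn addnS -doubleD /= odd_double /=.
by rewrite !uphalf_double odd_double.
Qed.

Lemma qbinom_gt (F : fieldType) (q : F) n k : (n < k)%N -> qbinom q n k = 0.
Proof. by rewrite /qbinom ltnNge => /negbTE ->. Qed.

Unset Implicit Arguments. Set Strict Implicit.

Lemma algA (F : fieldType) (a b q PP qj qs Ps Pj Pb Pa : F) :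
  1 - q * (qj * qj) * a != 0 ->
  1 - q * (q * (qj * qj)) * a != 0 ->
  1 - qs * (q * (q * (qj * qj)) * a) != 0 ->
  Pa != 0 ->
  1 - qs * q != 0 ->
  1 - qj * q != 0 ->
  Ps != 0 ->
  Pj != 0 ->
  PP * (1 - q * (qj * qs) * q) /
  (Pj * (1 - qj * q) * (Ps * (1 - qs * q))) *
  ((1 - q * qj * b) * Pb / (Pa * (1 - qs * (q * (q * (qj * qj)) * a)))) =
  PP / (Pj * (Ps * (1 - qs * q))) *
  ((1 - q * qj * b) * Pb / ((1 - q * (qj * qj) * a) * Pa)) +
  q * qj * (1 - q * qj * b) * (1 - qj * a) /
  ((1 - q * (qj * qj) * a) * (1 - q * (q * (qj * qj)) * a)) *
  (PP / (Pj * (1 - qj * q) * Ps) *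
   (Pb /
    (Pa * (1 - qs * (q * (q * (qj * qj)) * a)) /
     (1 - q * (q * (qj * qj)) * a)))).
Proof. move=> h1 h2 h3 h4 h5 h6 h7 h8. field. by rewrite h1 h2 h3 h4 h5 h6 h7 h8. Qed.

Lemma coreA (F : fieldType) (a b q : F)
  (ha : forall m : nat, 1 - q ^+ m * a != 0)
  (hq : forall m : nat, 1 - q ^+ m.+1 != 0) J s :
  qbinom q (J + s.+1).+1 J.+1 * cfun ((J + s.+1).+1 - J.+1) (q^+((J.+1).*2)*a) (q^+J.+1*b) q =
  qbinom q (J + s.+1) J * cfun (J + s.+1 - J) (q^+(J.*2.+1)*a) (q^+J.+1*b) q +
  Tfun a b q ((J.+1).*2) * (qbinom q (J + s.+1) J.+1 *
     cfun (J + s.+1 - J.+1) (q^+((J.+1).*2.+1)*a) (q^+J.+2*b) q).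
Proof.
have h1 : (J <= J + s.+1)%N by rewrite leq_addr.
have h2 : (J.+1 <= J + s.+1)%N by rewrite addnS ltnS leq_addr.
have h3 : (J.+1 <= (J + s.+1).+1)%N by rewrite ltnS.
have e1 : ((J + s.+1).+1 - J.+1 = s.+1)%N by rewrite subSS addKn.
have e2 : ((J + s.+1) - J = s.+1)%N by rewrite addKn.
have e3 : ((J + s.+1) - J.+1 = s)%N by rewrite -addSnnS addKn.
rewrite /qbinom h1 h2 h3 /cfun e1 e2 e3 !doubleS.
have hA1 : 1 - q ^+ (J.*2.+1) * a != 0 by [].
have hA2 : 1 - q ^+ (J.*2.+2) * a != 0 by [].
have hAs : 1 - q ^+ s * (q ^+ (J.*2.+2) * a) != 0 by rewrite mulrA -exprD.
have hPa : qpoch (q ^+ (J.*2.+2) * a) q s != 0 by apply: qpoch_a_neq0.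
have hqs : 1 - q ^+ s * q != 0 by rewrite -exprSr.
have hqj : 1 - q ^+ J * q != 0 by rewrite -exprSr.
have hPs : qpoch q q s != 0 by apply: qpoch_q_neq0.
have hPj : qpoch q q J != 0 by apply: qpoch_q_neq0.
rewrite (qpochSl a q (J.*2.+1) s) (qpochS (q^+(J.*2.+2)*a) q s) (qpoch_shift s hA2).
rewrite (qpochSl b q J.+1 s) (qpochS q q (J + s.+1)) (qpochS q q s) (qpochS q q J).
rewrite /Tfun /= odd_double /= doubleK /= doubleS.
move: hA1 hA2 hAs hPa hqs hqj hPs hPj.
rewrite addnS -!addnn !exprS !exprD; clear ha hq h1 h2 h3 e1 e2 e3.
move: (qpoch q q (J + s).+1) => PP.
move: (q ^+ J) (q ^+ s) => qj qs.
move: (qpoch q q s) (qpoch q q J) (qpoch (q * (q * qj) * b) q s) (qpoch (q * (q * (qj * qj)) * a) q s) => Ps Pj Pb Pa.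
exact: algA.
Qed.

Lemma algB (F : fieldType) (a b q PP qj qs Ps Pj Pb Pa : F) :
  1 - q * (qj * qj) * a != 0 ->
  1 - qj * qj * a != 0 ->
  1 - qs * (q * (qj * qj) * a) != 0 ->
  Pa != 0 -> 1 - qs * q != 0 -> 1 - qj * q != 0 -> Ps != 0 -> Pj != 0 ->
  PP / (Pj * (Ps * (1 - qs * q))) *
  (Pb * (1 - qs * (q * qj * b)) / (Pa * (1 - qs * (q * (qj * qj) * a)))) =
  PP / (Pj * (Ps * (1 - qs * q))) *
  ((1 - qj * b) * Pb / ((1 - qj * qj * a) * Pa)) +
  qj * (1 - q * qj) * (b - qj * a) /
  ((1 - q * (qj * qj) * a) * (1 - qj * qj * a)) *
  (PP / (Pj * (1 - qj * q) * Ps) *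
   (Pb / (Pa * (1 - qs * (q * (qj * qj) * a)) / (1 - q * (qj * qj) * a)))).
Proof. move=> h1 h2 h3 h4 h5 h6 h7 h8. field. by rewrite h1 h2 h3 h4 h5 h6 h7 h8. Qed.

Lemma coreB (F : fieldType) (a b q : F)
  (ha : forall m : nat, 1 - q ^+ m * a != 0)
  (hq : forall m : nat, 1 - q ^+ m.+1 != 0) j s :
  qbinom q (j + s.+1) j * cfun (j + s.+1 - j) (q^+(j.*2.+1)*a) (q^+j.+1*b) q =
  qbinom q (j + s.+1) j * cfun (j + s.+1 - j) (q^+(j.*2)*a) (q^+j*b) q +
  Tfun a b q (j.*2.+1) * (qbinom q (j + s.+1) j.+1 *
     cfun (j + s.+1 - j.+1) (q^+((j.+1).*2)*a) (q^+j.+1*b) q).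
Proof.
have h1 : (j <= j + s.+1)%N by rewrite leq_addr.
have h2 : (j.+1 <= j + s.+1)%N by rewrite addnS ltnS leq_addr.
rewrite /qbinom h1 h2 /cfun addKn -addSnnS addKn doubleS.
have hA1 : 1 - q ^+ (j.*2.+1) * a != 0 by [].
have hA0 : 1 - q ^+ (j.*2) * a != 0 by [].
have hAs : 1 - q ^+ s * (q ^+ (j.*2.+1) * a) != 0 by rewrite mulrA -exprD.
have hPa : qpoch (q ^+ (j.*2.+1) * a) q s != 0 by apply: qpoch_a_neq0.
have hqs : 1 - q ^+ s * q != 0 by rewrite -exprSr.
have hqj : 1 - q ^+ j * q != 0 by rewrite -exprSr.
have hPs : qpoch q q s != 0 by apply: qpoch_q_neq0.
have hPj : qpoch q q j != 0 by apply: qpoch_q_neq0.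
rewrite (qpochS (q^+(j.*2.+1)*a) q s) (qpochSl a q (j.*2) s) (qpoch_shift s hA1).
rewrite (qpochS (q^+j.+1*b) q s) (qpochSl b q j s) (qpochS q q s) (qpochS q q j).
rewrite /Tfun /= odd_double /= uphalf_double.
move: hA1 hA0 hAs hPa hqs hqj hPs hPj.
rewrite -!addnn !exprS !exprD; clear ha hq h1 h2.
move: (qpoch q q (j.+1 + s)) => PP.
move: (q ^+ j) (q ^+ s) => qj qs.
move: (qpoch q q s) (qpoch q q j) (qpoch (q * qj * b) q s) (qpoch (q * (qj * qj) * a) q s) => Ps Pj Pb Pa.
exact: algB.
Qed.

Lemma cfun0 (F : fieldType) (x y q : F) : cfun 0 x y q = 1.
Proof. by rewrite /cfun /qpoch !big_ord0 divr1. Qed.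

Lemma qbinom_nn (F : fieldType) (q : F) n :
  (forall m : nat, 1 - q ^+ m.+1 != 0) -> qbinom q n n = 1.
Proof.
move=> hq; rewrite /qbinom leqnn subnn {3}/qpoch big_ord0 mulr1 divff //.
exact: qpoch_q_neq0.
Qed.

Lemma qbinom_n0 (F : fieldType) (q : F) n :
  (forall m : nat, 1 - q ^+ m.+1 != 0) -> qbinom q n 0 = 1.
Proof.
move=> hq; rewrite /qbinom leq0n subn0 {2}/qpoch big_ord0 mul1r divff //.
exact: qpoch_q_neq0.
Qed.

Lemma coreC (F : fieldType) (a b q : F)
  (ha : forall m : nat, 1 - q ^+ m * a != 0)
  (hq : forall m : nat, 1 - q ^+ m.+1 != 0) m :
  Afun a b q (m.+1).*2 0 = Tfun a b q 0 * Afun a b q (m.*2.+1) 1.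
Proof.
have -> : (0 : int) = Posz (0.*2) by [].
have -> : (1 : int) = Posz (0.*2.+1) by [].
rewrite Afun_ev Afun_od.
rewrite !subn0 !qbinom_n0 // !mul1r /cfun.
have hA : 1 - a != 0 by have := ha 0; rewrite expr0 mul1r.
have hP : qpoch (q ^+ 1 * a) q m != 0 by apply: qpoch_a_neq0.
have Ea := qpochSl a q 0 m; have Eb := qpochSl b q 0 m.
rewrite expr0 !mul1r in Ea Eb.
rewrite Ea Eb /Tfun /=.
by rewrite invfM mulrACA.
Qed.

Ltac par := rewrite ?addn0 ?addn1 ?addnS ?addSn /= ?oddD ?odd_double ?addn0 ?addn1 ?addnS ?addSn /= ?odd_double //.

Lemma par_cases n : (exists m, n = m.*2) \/ (exists m, n = m.*2.+1).
Proof.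
have := odd_double_half n; case: (odd n) => /= <-; [right|left]; by exists n./2.
Qed.

Theorem theorem1 (F : fieldType) (a b q : F)
  (ha : forall m : nat, 1 - q ^+ m * a != 0)
  (hq : forall m : nat, 1 - q ^+ m.+1 != 0) :
  (forall k : int, Afun a b q 0 k = (k == 0)%:R) /\
  (forall n : nat, Afun a b q n.+1 0 = Tfun a b q 0 * Afun a b q n 1) /\
  (forall (n k : nat), (1 <= k)%N ->
     Afun a b q n.+1 (Posz k) =
       Afun a b q n (Posz k.-1) + Tfun a b q k * Afun a b q n (Posz k.+1)).
Proof.
split; [|split].
- case=> [k|k] //.
  case: k => [|k].
    by rewrite /Afun /= qbinom_nn // cfun0 mulr1.
  rewrite /Afun /=; case: ifP => // hk.
  case: k hk => [|k] //= _.
  by rewrite qbinom_gt // mul0r.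
- move=> n; case: (par_cases n) => [[m ->]|[m ->]].
    by rewrite !Afun_par ?mulr0 //; par.
  by rewrite -(doubleS m) coreC.
- move=> n k.
  case: (par_cases n) => [[m ->]|[m ->]]; case: (par_cases k) => [[j ->]|[j ->]].
  + case: j => [|j] // _.
    by rewrite !Afun_par ?mulr0 ?addr0 //; par.
  + move=> _.
    rewrite (Afun_od a b q m j) -[(j.*2.+1).-1]/(j.*2) (Afun_ev a b q m j).
    rewrite -[j.*2.+2]/((j.+1).*2) (Afun_ev a b q m j.+1).
    case: (ltnP m j) => hmj.
      have h1 := qbinom_gt q hmj.
      have h2 : qbinom q m j.+1 = 0 by apply: qbinom_gt; rewrite ltnS ltnW.
      by rewrite h1 h2 !mul0r mulr0 addr0.
    have [s ->] : exists s, m = (j + s)%N by exists (m - j)%N; rewrite subnKC.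
    case: s => [|s].
      have h2 : qbinom q (j + 0) j.+1 = 0 by apply: qbinom_gt; rewrite addn0.
      rewrite h2 addn0 subnn (@qbinom_nn _ q j hq).
      by rewrite (@cfun0 _ (q ^+ j.*2.+1 * a)) (@cfun0 _ (q ^+ j.*2 * a)) !mul0r mulr0 addr0.
    exact: coreB.
  + case: j => [|J] // _.
    rewrite -[m.*2.+2]/((m.+1).*2) (Afun_ev a b q m.+1 J.+1).
    rewrite -[(J.+1).*2.-1]/(J.*2.+1) (Afun_od a b q m J) (Afun_od a b q m J.+1).
    case: (ltnP m J) => hmj.
      have h1 := qbinom_gt q hmj.
      have h2 : qbinom q m J.+1 = 0 by apply: qbinom_gt; rewrite ltnS ltnW.
      have h3 : qbinom q m.+1 J.+1 = 0 by apply: qbinom_gt.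
      by rewrite h1 h2 h3 !mul0r mulr0 addr0.
    have [s ->] : exists s, m = (J + s)%N by exists (m - J)%N; rewrite subnKC.
    case: s => [|s].
      have h2 : qbinom q (J + 0) J.+1 = 0 by apply: qbinom_gt; rewrite addn0.
      rewrite h2 addn0 !subnn (@qbinom_nn _ q J hq) (@qbinom_nn _ q J.+1 hq).
      by rewrite !cfun0 !mul0r mulr0 addr0.
    exact: coreA.
  + move=> _.
    by rewrite !Afun_par ?mulr0 ?addr0 //; par.
Qed.
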